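(* Let $K$ be a locally compact Hausdorff space and $X$ a strictly convex real Banach space. Let $t_0\in K$ and $x_0\in S_X$. Then $A(t_0,x_0)=\{f\in S_{C_0(K,X)}: f(t_0)=x_0\}$ is a maximal norm-closed proper face of $B_{C_0(K,X)}$, equivalently, a maximal convex subset of $S_{C_0(K,X)}$.
   Context: All Banach spaces are real. $C_0(K,X)$ is the Banach space of continuous functions $K\to X$ vanishing at infinity, with sup norm. A Banach space is strictly convex if every point of its unit sphere is an extreme point of its closed unit ball. *)

(* Defs.v *)
From HB Require Import structures.
From mathcomp Require Import all_boot all_order all_algebra.
From mathcomp Require Import all_classical all_reals all_analysis.
Set Implicit Arguments. Unset Strict Implicit. Unset Printing Implicit Defensive.
Import Order.TTheory GRing.Theory Num.Theory.
Import numFieldNormedType.Exports.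
Local Open Scope classical_set_scope.
Local Open Scope ring_scope.

Section Defs.
Variables (R : realType) (X : normedModType R).

Definition ballX : set X := [set x | `|x| <= 1].
Definition sphX : set X := [set x | `|x| = 1].

Definition extreme_point (A : set X) (x : X) :=
  A x /\ forall (y z : X) (l : R), A y -> A z -> 0 < l < 1 ->
    x = l *: y + (1 - l) *: z -> y = x /\ z = x.

Definition strictly_convex := forall x, sphX x -> extreme_point ballX x.

Variable K : topologicalType.

Definition C0 : set (K -> X) :=
  [set f | continuous f /\
    forall eps : R, 0 < eps -> exists C : set K,
      compact C /\ forall t, ~ C t -> `|f t| < eps].

Definition supn (f : K -> X) : R := sup [set `|f t| | t in [set: K]].

Definition ballC0 : set (K -> X) := [set f | C0 f /\ supn f <= 1].
Definition sphC0 : set (K -> X) := [set f | C0 f /\ supn f = 1].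

Definition comb (l : R) (f g : K -> X) : K -> X :=
  fun t => l *: f t + (1 - l) *: g t.

Definition convex_fset (A : set (K -> X)) :=
  forall f g l, A f -> A g -> 0 <= l <= 1 -> A (comb l f g).

Definition face_ballC0 (F : set (K -> X)) :=
  F `<=` ballC0 /\ convex_fset F /\
  forall f g l, ballC0 f -> ballC0 g -> 0 < l < 1 -> F (comb l f g) ->
    F f /\ F g.

Definition norm_closed (F : set (K -> X)) :=
  F `<=` C0 /\
  forall g, C0 g -> (forall eps : R, 0 < eps ->
      exists f, F f /\ supn (fun t => f t - g t) < eps) -> F g.

Definition closed_proper_face (F : set (K -> X)) :=
  face_ballC0 F /\ norm_closed F /\ F !=set0 /\ F <> ballC0.

Definition maximal_closed_proper_face (F : set (K -> X)) :=
  closed_proper_face F /\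
  forall G, closed_proper_face G -> F `<=` G -> G = F.

Definition maximal_convex_in_sphC0 (F : set (K -> X)) :=
  F `<=` sphC0 /\ convex_fset F /\
  forall G, G `<=` sphC0 -> convex_fset G -> F `<=` G -> G = F.

Definition A_set (t0 : K) (x0 : X) : set (K -> X) :=
  [set f | sphC0 f /\ f t0 = x0].

End Defs.

(* Main.v *)
Require Import Defs.
From HB Require Import structures.
From mathcomp Require Import all_boot all_order all_algebra.
From mathcomp Require Import all_classical all_reals all_analysis.
From mathcomp Require Import ring lra.
Import Order.TTheory GRing.Theory Num.Theory.
Import numFieldNormedType.Exports.
Local Open Scope classical_set_scope.
Local Open Scope ring_scope.

Set Implicit Arguments. Unset Strict Implicit. Unset Printing Implicit Defensive.
Section S.
Variables (R : realType) (X : normedModType R) (K : topologicalType).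

Lemma C0_bounded (f : K -> X) : C0 f -> exists M, forall t, `|f t| <= M.
Proof.
case=> cf /(_ 1 ltr01) [C [cC Cf]].
have : compact (f @` C).
  by apply: continuous_compact => //; exact: continuous_subspaceT.
move=> /compact_bounded [M [_ HM]].
exists (Num.max (M + 1) 1) => t.
have [Ct|nCt] := pselect (C t).
  rewrite le_max; apply/orP; left; apply: HM; first by rewrite ltrDl.
  by exists t.
by rewrite le_max; apply/orP; right; apply/ltW/Cf.
Qed.

Lemma supn_ge (f : K -> X) t : (exists M, forall t, `|f t| <= M) -> `|f t| <= supn f.
Proof.
case=> M HM; apply: sup_upper_bound; last by exists t.
split; first by exists `|f t|, t.
by exists M => _ [s _ <-].
Qed.

Lemma supn_le (f : K -> X) (t0 : K) M : (forall t, `|f t| <= M) -> supn f <= M.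
Proof.
move=> HM; apply: ge_sup; first by exists `|f t0|, t0.
by move=> _ [s _ <-].
Qed.

Lemma C0_lin (a b : R) (f g : K -> X) : C0 f -> C0 g ->
  C0 (fun t => a *: f t + b *: g t).
Proof.
case=> cf Hf [cg Hg]; split.
  move=> t; apply: cvgD; apply: cvgZ; (exact: cvg_cst || exact: cf || exact: cg).
move=> eps eps0.
set e' := eps / (`|a| + `|b| + 1).
have e'0 : 0 < e' by rewrite divr_gt0 // ltr_wpDl // addr_ge0.
have [Cf [cCf HCf]] := Hf e' e'0.
have [Cg [cCg HCg]] := Hg e' e'0.
exists (Cf `|` Cg); split; first exact: compactU.
move=> t nC.
have nf : ~ Cf t by move=> h; apply: nC; left.
have ng : ~ Cg t by move=> h; apply: nC; right.
apply: (le_lt_trans (ler_normD _ _)); rewrite !normrZ.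
have -> : eps = (`|a| + `|b| + 1) * e' by rewrite /e' mulrC divfK // gt_eqF // ltr_wpDl // addr_ge0.
rewrite mulrDl mul1r; apply: ltr_pwDr => //; rewrite mulrDl.
apply: lerD; apply: ler_wpM2l => //; apply/ltW; [exact: HCf|exact: HCg].
Qed.

Lemma bump (hK : hausdorff_space K) (lcK : locally_compact [set: K]) (t0 : K)
  (V : set K) : open V -> V t0 ->
  exists (phi : K -> R) (C : set K), [/\ continuous phi,
    (forall t, 0 <= phi t <= 1), phi t0 = 1, compact C &
    (forall t, ~ (C `&` V) t -> phi t = 0)].
Proof.
move=> oV Vt0.
have [U nU [cU _]] := lcK t0 I.
rewrite withinET in nU.
have nUV : nbhs t0 (U `&` V) by apply: filterI => //; exact: open_nbhs_nbhs.
set W := interior (U `&` V).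
have Wt0 : W t0 by [].
have cB : closed (~` W) by apply: open_closedC; exact: open_interior.
have nB : ~ (~` W) t0 by [].
have := @locally_compact_completely_regular K R lcK hK t0 (~` W) cB nB.
move=> /(@uniform_separatorP _ R) [f [cf f01 f0 f1]].
exists (fun t => 1 - f t), U; split.
- by move=> t; apply: cvgB; [exact: cvg_cst| exact: cf].
- move=> t; have : range f (f t) by exists t.
  move/f01.
  by rewrite /= in_itv /= => /andP [h1 h2]; rewrite subr_ge0 h2 lerBlDr lerDl h1.
- have -> : f t0 = 0 by apply: f0; exists t0.
  by rewrite subr0.
- exact: cU.
- move=> t ht; have -> : f t = 1 by apply: f1; exists t => // /interior_subset.
  by rewrite subrr.
Qed.
Lemma core (hK : hausdorff_space K) (lcK : locally_compact [set: K])
  (hX : strictly_convex X) (t0 : K) (x0 : X) (hx0 : sphX x0) (g : K -> X) :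
  C0 g -> (forall t, `|g t| <= 1) -> g t0 <> x0 ->
  exists f b, [/\ A_set t0 x0 f, 0 <= b, b < 1 &
     forall t, `|comb (2^-1) f g t| <= b].
Proof.
move=> C0g g1 gt0.
have nx0 : `|x0| = 1 := hx0.
set c := `|x0 + g t0|.
have c2 : c < 2.
  have cle : c <= 2.
    by rewrite /c (le_trans (ler_normD _ _)) // nx0 -[2]/(1 + 1)%R lerD2l.
  rewrite lt_neqAle cle andbT; apply/eqP => ceq.
  pose m := 2^-1 *: (x0 + g t0).
  have sm : sphX m by rewrite /sphX /= /m normrZ ger0_norm // -/c ceq mulVf.
  have [_ ext] := hX m sm.
  have bx0 : ballX x0 by rewrite /ballX /= nx0.
  have bg : ballX (g t0) by exact: g1.
  have l01 : 0 < (2:R)^-1 < 1 by rewrite invr_gt0 ltr0n /=; lra.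
  have [|e1 e2] := ext x0 (g t0) (2^-1) bx0 bg l01.
    by rewrite /m scalerDr; congr (_ + _); congr (_ *: _); field.
  by apply: gt0; rewrite e1 e2.
set d := (2 - c) / 2.
have d0 : 0 < d by rewrite /d divr_gt0 // subr_gt0.
have d1 : d <= 1.
  by rewrite /d ler_pdivrMr // mul1r lerBlDr lerDl /c.
set V := [set t | `|x0 + g t| < 2 - d].
have oV : open V.
  apply: (@open_comp _ _ (fun t => `|x0 + g t|) [set x | x < 2 - d]); last exact: open_lt.
  move=> t _; apply: cvg_norm; apply: cvgD; [exact: cvg_cst | exact: C0g.1].
have Vt0 : V t0 by rewrite /V /= -/c /d; lra.
have [phi [C [cphi phi01 phit0 cC phi0]]] := bump hK lcK oV Vt0.
pose f := fun t => phi t *: x0 + (phi t - 1) *: g t.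
have f1 : forall t, `|f t| <= 1.
  move=> t; have /andP[p0 p1] := phi01 t.
  apply: (le_trans (ler_normD _ _)); rewrite !normrZ nx0 mulr1 ger0_norm //.
  rewrite ler0_norm ?subr_le0 //.
  have := g1 t; have : 0 <= 1 - phi t by rewrite subr_ge0.
  move=> h1 h2; have := ler_wpM2l h1 h2; nra.
have ft0 : f t0 = x0 by rewrite /f phit0 subrr scale0r addr0 scale1r.
have C0f : C0 f.
  split.
    move=> t; apply: cvgD; apply: cvgZ; try exact: cvg_cst; try exact: cphi.
      by apply: cvgB; [exact: cphi|exact: cvg_cst].
    exact: C0g.1.
  move=> eps eps0; have [Cg [cCg HCg]] := C0g.2 eps eps0.
  exists (C `|` Cg); split; first exact: compactU.
  move=> t nt; rewrite /f; have -> : phi t = 0 by apply: phi0 => -[Ct _]; apply: nt; left.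
  rewrite /f scale0r add0r sub0r scaleN1r normrN; apply: HCg => h; apply: nt; by right.
exists f, (1 - d / 2); split.
- split => //; split => //; apply/eqP; rewrite eq_le; apply/andP; split.
    exact: supn_le t0 _ f1.
  by rewrite -nx0 -{1}ft0; apply: supn_ge; exists 1.
- lra.
- lra.
- move=> t; have /andP[p0 p1] := phi01 t.
  have -> : comb 2^-1 f g t = (phi t / 2) *: (x0 + g t).
    rewrite /comb /f !scalerDr !scalerA -!addrA; congr (_ + _).
      by congr (_ *: _); rewrite mulrC.
    by rewrite -scalerDl; congr (_ *: _); field.
  rewrite normrZ ger0_norm ?divr_ge0 //.
  have [Vt|nVt] := pselect (V t).
    have := ltW Vt; have : 0 <= phi t / 2 by rewrite divr_ge0.
    move=> h1 h2; have := ler_wpM2l h1 h2; have : phi t / 2 <= 2^-1 by rewrite ler_pdivrMr // mulVf // mul1r.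
    move=> h3 h4; have nn : 0 <= `|x0 + g t| by [].
    nra.
  rewrite phi0 ?mul0r ?div0r; first lra.
  by move=> [].
Qed.
Lemma C0_scale (a : R) (f : K -> X) : C0 f -> C0 (fun t => a *: f t).
Proof.
move=> Cf; have := C0_lin a 0 Cf Cf; congr C0; apply: funext => t.
by rewrite scale0r addr0.
Qed.

Lemma C0_0 : C0 (fun _ : K => (0 : X)).
Proof.
split; first by move=> t; exact: cvg_cst.
move=> eps eps0; exists set0; split; first exact: compact0.
by move=> t _; rewrite normr0.
Qed.

Lemma C0_le (f : K -> X) : C0 f -> supn f <= 1 -> forall t, `|f t| <= 1.
Proof.
move=> Cf s1 t; apply: le_trans s1; apply: supn_ge; exact: C0_bounded.
Qed.

Lemma supn_eq1 (f : K -> X) t0 : (forall t, `|f t| <= 1) -> `|f t0| = 1 ->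
  supn f = 1.
Proof.
move=> f1 ft0; apply/eqP; rewrite eq_le; apply/andP; split.
  exact: supn_le t0 _ f1.
by rewrite -ft0; apply: supn_ge; exists 1.
Qed.
End S.

Theorem lemma2p11 (R : realType) (X : completeNormedModType R)
  (K : topologicalType)
  (hK : hausdorff_space K) (lcK : locally_compact [set: K])
  (hX : strictly_convex X) (t0 : K) (x0 : X) (hx0 : sphX x0) :
  maximal_closed_proper_face (A_set t0 x0) /\
  maximal_convex_in_sphC0 (A_set t0 x0).
Proof.
have nx0 : `|x0| = 1 := hx0.
have x0n0 : x0 <> 0 by move=> e; move: nx0; rewrite e normr0 => /eqP; rewrite eq_sym oner_eq0.
have l01 : 0 < (2:R)^-1 < 1 by rewrite invr_gt0 ltr0n /=; lra.
have l01' : 0 <= (2:R)^-1 <= 1 by rewrite invr_ge0 ler0n /=; lra.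
have Aconv : convex_fset (A_set t0 x0).
  move=> f g l [[C0f sf] ft0] [[C0g sg] gt0] /andP[l0 l1].
  have f1 : forall t, `|f t| <= 1 by apply: C0_le => //; rewrite sf.
  have g1 : forall t, `|g t| <= 1 by apply: C0_le => //; rewrite sg.
  have ct0 : comb l f g t0 = x0.
    by rewrite /comb ft0 gt0 -scalerDl addrC subrK scale1r.
  split => //; split; first exact: C0_lin.
  apply: (supn_eq1 (t0 := t0)); last by rewrite ct0.
  move=> t; rewrite /comb; apply: (le_trans (ler_normD _ _)).
  rewrite !normrZ ger0_norm // ger0_norm ?subr_ge0 //.
  have := f1 t; have := g1 t; nra.
have notA g : ballC0 g -> ~ A_set t0 x0 g -> g t0 <> x0.
  move=> [C0g sg] nA e; apply: nA; split => //; split => //.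
  by apply: (supn_eq1 (t0 := t0)); [exact: C0_le | rewrite e].
split.
  split.
    split.
      split.
        by move=> f [[C0f sf] _]; split => //; rewrite sf.
      split => //.
      move=> f g l [C0f sf] [C0g sg] /andP[l0 l1] [[_ _] ht0].
      have bf : ballX (f t0) by exact: (C0_le C0f sf).
      have bg : ballX (g t0) by exact: (C0_le C0g sg).
      have l01'' : 0 < l < 1 by rewrite l0 l1.
      have [e1 e2] := (hX x0 hx0).2 (f t0) (g t0) l bf bg l01'' (esym ht0).
      split; (split => //; split => //); apply: (supn_eq1 (t0 := t0));
        by [exact: C0_le | rewrite ?e1 ?e2].
    split.
      split; first by move=> f [[]].
      move=> g C0g H.
      have [Mf1 _] : True /\ True by [].
      have key : forall e : R, 0 < e -> exists f, A_set t0 x0 f /\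
          forall t, `|f t - g t| <= e.
        move=> e e0; have [f [Af sfg]] := H e e0; exists f; split => //.
        move=> t; apply/ltW/(le_lt_trans _ sfg); apply: (supn_ge (f := fun s => f s - g s)).
        have [Mf HMf] := C0_bounded Af.1.1.
        have [Mg HMg] := C0_bounded C0g.
        exists (Mf + Mg) => s; apply: (le_trans (ler_normB _ _)).
        exact: lerD.
      have gt0 : g t0 = x0.
        apply/eqP; rewrite eq_sym -subr_eq0 -normr_eq0 eq_le normr_ge0 andbT.
        apply/ler_addgt0Pr => e e0; rewrite add0r.
        have [f [[_ ft0] hf]] := key e e0; by rewrite -ft0.
      split => //; split => //.
      apply: (supn_eq1 (t0 := t0)); last by rewrite gt0.
      move=> t; apply/ler_addgt0Pr => e e0.
      have [f [[[C0f sf] _] hf]] := key e e0.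
      have -> : g t = f t - (f t - g t) by rewrite opprB addrC subrK.
      apply: (le_trans (ler_normB _ _)); apply: lerD; last exact: hf.
      by apply: C0_le => //; rewrite sf.
    split.
      have z1 : forall t : K, `|(fun _ : K => (0:X)) t| <= 1.
        by move=> t; rewrite normr0.
      have z0 : (fun _ : K => (0:X)) t0 <> x0 by exact: (nesym x0n0).
      have := @core R X K hK lcK hX t0 x0 hx0 _ (@C0_0 R X K) z1 z0.
      move=> [f [b [Af _ _ _]]].
      by exists f.
    move=> e; have : ballC0 (fun _ : K => (0 : X)).
      split; first exact: C0_0.
      by apply: (supn_le t0) => t; rewrite normr0.
    by rewrite -e => -[_ /esym].
  move=> G [[Gb [Gconv Gface]] [[_ _] [_ Gprop]]] AG.
  apply/seteqP; split => // g Gg.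
  apply: contrapT => nAg.
  have bg := Gb g Gg.
  have g1 := C0_le bg.1 bg.2.
  have [f [b [Af b0 b1 hb]]] := core hK lcK hX hx0 bg.1 g1 (notA g bg nAg).
  have Gh : G (comb 2^-1 f g) by apply: Gconv => //; exact: AG.
  set h := comb 2^-1 f g.
  have C0h : C0 h by apply: C0_lin; [exact: Af.1.1| exact: bg.1].
  set l := (1 - b) / 2.
  have l0 : 0 < l < 1 by rewrite /l; apply/andP; split; lra.
  have l1 : 0 < 1 - l by rewrite /l; lra.
  set h' := fun t => (1 - l)^-1 *: h t.
  have bh' : ballC0 h'.
    split; first exact: C0_scale.
    apply: (supn_le t0) => t; rewrite /h' normrZ ger0_norm; last first.
      by rewrite invr_ge0 ltW.
    rewrite mulrC ler_pdivrMr // mul1r; apply: (le_trans (hb t)).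
    rewrite /l; lra.
  have b0f : ballC0 (fun _ : K => (0 : X)).
    split; first exact: C0_0.
    by apply: (supn_le t0) => t; rewrite normr0.
  have eh : comb l (fun _ => 0) h' = h.
    apply: funext => t; rewrite /comb /h' scaler0 add0r scalerA mulfV ?scale1r //.
    by rewrite gt_eqF.
  have := Gface (fun _ => 0) h' l b0f bh' l0; rewrite eh => /(_ Gh) [G0 _].
  apply: Gprop; apply/seteqP; split => // k bk.
  set k' := fun t => -1 *: k t.
  have bk' : ballC0 k'.
    split; first exact: C0_scale bk.1.
    apply: (supn_le t0) => t; rewrite /k' scaleN1r normrN.
    exact: C0_le bk.1 bk.2 t.
  have ek : comb 2^-1 k k' = (fun _ => 0).
    apply: funext => t; rewrite /comb /k' scalerA -scalerDl.
    have -> : (2^-1 + (1 - 2^-1) * -1 : R) = 0 by field.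
    by rewrite scale0r.
  have [] := Gface k k' 2^-1 bk bk' l01; by rewrite ?ek.
split.
  by move=> f [].
split => //.
move=> G Gs Gconv AG.
apply/seteqP; split => // g Gg.
apply: contrapT => nAg.
have [C0g sg] := Gs g Gg.
have bg : ballC0 g by split => //; rewrite sg.
have g1 := C0_le C0g bg.2.
have [f [b [Af b0 b1 hb]]] := core hK lcK hX hx0 C0g g1 (notA g bg nAg).
have Gh : G (comb 2^-1 f g) by apply: Gconv => //; exact: AG.
have [_ sh] := Gs _ Gh.
have : supn (comb 2^-1 f g) <= b by apply: (supn_le t0).
by rewrite sh; lra.
Qed.
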